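(* Let $n\in\mathbb N$. Then there exists $k_0\in\mathbb N$ such that for all $k,j\in\mathbb N$ with $j\ge k\ge k_0$, $$p^{(j)}_n\le 2^{j-k}p^{(k)}_n\prod_{i=1}^{j-k}\left(\log p^{(k)}_n+i\log i\,\log\log p^{(k)}_n\right).$$
   Context: Let $p_n$ denote the $n$-th prime number. Define $p^{(0)}_n=n$ and recursively $p^{(k+1)}_n=p_{p^{(k)}_n}$ for $k\in\mathbb N_0$. $\log$ is the natural logarithm; an empty product equals $1$. *)

(* Defs.v *)
From mathcomp Require Import all_boot.
From Stdlib Require Import Reals.

Lemma next_prime_ex (m : nat) : exists p, (m < p) && prime p.
Proof. by case: (prime_above m) => p H1 H2; exists p; apply/andP. Qed.

Definition next_prime (m : nat) : nat := ex_minn (next_prime_ex m).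

(* p_n, the n-th prime (1-indexed): p_1 = 2, p_2 = 3, ...; p_0 := 0 (unused) *)
Definition nth_prime (n : nat) : nat := iter n next_prime 0.

Definition iter_prime (k n : nat) : nat := iter k nth_prime n.

Definition prodR (m : nat) (f : nat -> R) : R :=
  foldr Rmult 1%R (map f (iota 1 m)).

(* Main.v *)
Require Import Defs.
From mathcomp Require Import all_boot zify.

Lemma binom_lb n : 4 ^ n <= (2 * n).+1 * 'C(2 * n, n).
Proof.
elim: n => [|n IH]; first by [].
have h1 := mul_bin_diag (2 * n.+1) n.
have h2 := mul_bin_down (2 * n).+1 n.
have e1 : (2 * n.+1).-1 = (2 * n).+1 by lia.
have e2 : (2 * n).+1.-1 = 2 * n by [].
rewrite e1 in h1; rewrite e2 in h2.
have e3 : (2 * n).+1 - n = n.+1 by lia.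
rewrite e3 in h2.
rewrite expnS.
set B := 'C((2 * n).+1, n) in h1 h2.
set C0 := 'C(2 * n, n) in IH h2.
set C1 := 'C(2 * n.+1, n.+1) in h1 *.
have hC1 : C1 = 2 * B by nia.
rewrite hC1. nia.
Qed.

Lemma sum_le_min (T m : nat) : \sum_(1 <= k < m.+1) (k <= T) = minn m T.
Proof.
elim: m => [|m IH]; first by rewrite big_geq // min0n.
rewrite big_nat_recr //= IH; case: (leqP m.+1 T) => h; rewrite ?h /=; lia.
Qed.

Lemma logn_fact_ext p n m : prime p -> n <= m ->
  logn p n`! = \sum_(1 <= k < m.+1) n %/ p ^ k.
Proof.
move=> pp le; rewrite logn_fact // [RHS](big_cat_nat (n := n.+1)) //=.
rewrite [X in _ + X]big1_seq ?addn0 // => k /andP [_]; rewrite mem_index_iota => /andP [h _].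
apply: divn_small; apply: leq_trans h _; apply: ltnW; apply: ltn_expl; exact: prime_gt1.
Qed.

Lemma logn_bin p n : prime p -> logn p 'C(2 * n, n) <= trunc_log p (2 * n).
Proof.
move=> pp.
have hn2 : n <= 2 * n by lia.
have hf := bin_fact hn2.
have e : 2 * n - n = n by lia. rewrite e in hf.
have hl : logn p (2 * n)`! = logn p 'C(2 * n, n) + 2 * logn p n`!.
  rewrite -hf lognM ?muln_gt0 ?fact_gt0 ?bin_gt0 ?andbT //.
  rewrite lognM ?fact_gt0 //; lia.
rewrite (@logn_fact_ext p (2 * n) (2 * n) pp (leqnn _)) in hl.
rewrite (@logn_fact_ext p n (2 * n) pp hn2) in hl.
set T := trunc_log p (2 * n).
have key : \sum_(1 <= k < (2 * n).+1) (2 * n) %/ p ^ k <=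
   \sum_(1 <= k < (2 * n).+1) (2 * (n %/ p ^ k) + (k <= T)).
  apply: leq_sum => k _.
  have p1 := prime_gt1 pp.
  have d0 : 0 < p ^ k by rewrite expn_gt0 prime_gt0.
  case: (leqP k T) => hk.
    rewrite addn1 -ltnS ltn_divLR //.
    have := ltn_ceil n d0. nia.
  rewrite divn_small ?addn0 //.
  apply: leq_trans (trunc_log_ltn (2 * n) p1) _.
  by rewrite leq_exp2l.
rewrite big_split /= -big_distrr /= sum_le_min in key.
lia.
Qed.


Definition pic N := count prime (iota 0 N.+1).

Lemma picS N : pic N.+1 = pic N + prime N.+1.
Proof. rewrite /pic -addn1 iotaD count_cat /= add0n addn0; congr (_ + prime _). Qed.

Lemma pic_mono a b : a <= b -> pic a <= pic b.
Proof.
move=> h; rewrite -(subnK h); elim: (b - a) => [|d IH] //=.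
rewrite addSn picS; lia.
Qed.

Lemma bin_le_pow n : 0 < n -> 'C(2 * n, n) <= (2 * n) ^ (pic (2 * n)).
Proof.
move=> n0.
have C0 : 0 < 'C(2 * n, n) by rewrite bin_gt0; lia.
rewrite {1}(prod_prime_decomp C0) prime_decompE big_map /=.
have hp : forall p, p \in primes 'C(2 * n, n) -> p ^ logn p 'C(2 * n, n) <= 2 * n.
  move=> p; rewrite mem_primes => /and3P [pp _ _].
  apply: leq_trans (trunc_logP (prime_gt1 pp) _); last by lia.
  by rewrite leq_exp2l ?prime_gt1 // logn_bin.
apply: (@leq_trans (\prod_(p <- primes 'C(2 * n, n)) (2 * n))).
  rewrite big_seq_cond [X in _ <= X]big_seq_cond.
  apply: leq_prod => p /andP [hp1 _]; exact: hp.
rewrite big_const_seq count_predT iter_muln_1.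
apply: leq_pexp2l; first lia.
rewrite /pic -size_filter.
apply: uniq_leq_size; first exact: primes_uniq.
move=> p hpm; rewrite mem_filter mem_iota /=.
have h := hp p hpm.
have hpm' := hpm; move: hpm'; rewrite mem_primes => /and3P [pp _ dv].
rewrite pp /=.
have : p <= p ^ logn p 'C(2 * n, n).
  by rewrite -{1}(expn1 p) leq_exp2l ?prime_gt1 // logn_gt0.
lia.
Qed.


Lemma next_prime_spec m :
  [/\ m < next_prime m, prime (next_prime m) &
      forall q, m < q -> prime q -> next_prime m <= q].
Proof.
rewrite /next_prime; case: ex_minnP => p /andP [h1 h2] hm; split => // q h3 h4.
by apply: hm; rewrite h3 h4.
Qed.

Lemma pic_gap a d : a + d < next_prime a -> pic (a + d) = pic a.
Proof.
elim: d => [|d IH] h; first by rewrite addn0.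
rewrite addnS picS IH; last by lia.
case: (next_prime_spec a) => _ _ hm.
case pq: (prime (a + d).+1) => //.
have := hm _ (_ : a < (a + d).+1) pq; first lia.
lia.
Qed.

Lemma pic_next a : pic (next_prime a) = (pic a).+1.
Proof.
case: (next_prime_spec a) => h1 h2 _.
have e : next_prime a = (a + (next_prime a - a).-1).+1 by lia.
rewrite e picS pic_gap -?e ?h2 ?addn1 //; lia.
Qed.

Lemma pic_nth m : pic (nth_prime m) = m.
Proof. elim: m => [|m IH] //=; by rewrite pic_next IH. Qed.

Lemma nth_primeS m : nth_prime m.+1 = next_prime (nth_prime m).
Proof. by []. Qed.

Lemma nth_prime_prime m : 0 < m -> prime (nth_prime m).
Proof. case: m => // m _; rewrite nth_primeS; by case: (next_prime_spec (nth_prime m)). Qed.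

Lemma nth_prime_gt m : 0 < m -> m < nth_prime m.
Proof.
elim: m => [|m IH] // _; rewrite nth_primeS.
case: (next_prime_spec (nth_prime m)) => h1 h2 _.
case: m IH h1 h2 => [|m] IH h1 h2; first by have := prime_gt1 h2; lia.
have := IH isT; lia.
Qed.

Lemma nth_prime_ge m : m <= nth_prime m.
Proof. case: m => // m; have := @nth_prime_gt m.+1 (ltn0Sn m); lia. Qed.

Lemma nth_prime_le m N : 0 < m -> m <= pic N -> nth_prime m <= N.
Proof.
move=> m0 h; rewrite leqNgt; apply/negP => hN.
have e : nth_prime m = (nth_prime m).-1.+1 by have := @nth_prime_gt m m0; lia.
have := pic_nth m; rewrite e picS -e nth_prime_prime // => e2.
have hh : N <= (nth_prime m).-1 by lia.
have := pic_mono _ _ hh; move: e2 => /=.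
lia.
Qed.

From Stdlib Require Import Reals Lra Lia.
From Stdlib Require ZArith.

Lemma cheb_nat n : (0 < n)%N -> (expn 4 n <= (2 * n).+1 * expn (2 * n) (pic (2 * n)))%N.
Proof.
move=> n0; apply: (leq_trans (binom_lb n)); rewrite leq_mul2l; apply/orP; right.
exact: bin_le_pow.
Qed.

Open Scope R_scope.

Lemma ln_le_sub1 x : 0 < x -> ln x <= x - 1.
Proof. move=> h; have := exp_ineq1_le (ln x); rewrite exp_ln //; lra. Qed.

Lemma ln2_bounds : 3/5 <= ln 2 <= 1.
Proof.
split; last by have := ln_le_sub1 2; lra.
apply: Rnot_lt_le => h.
set y := exp (3/5).
have hy : 2 < y by rewrite -[2](exp_ln 2) ?{2}/y; [apply: exp_increasing | lra].
have e1 : exp 3 = exp 1 * exp 1 * exp 1 by rewrite -!exp_plus; f_equal; lra.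
have e2 : exp 3 = y * y * y * y * y by rewrite /y -!exp_plus; f_equal; lra.
have h3 := exp_le_3. have h0 : 0 < exp 1 := exp_pos 1.
have : exp 3 <= 27 by rewrite e1; nra.
have : 32 < exp 3.
  rewrite e2. have a1 : 4 < y * y by nra. have a2 : 8 < y * y * y by nra. have a3 : 16 < y * y * y * y by nra. nra.
lra.
Qed.

Lemma ln_small u : 400 <= u -> ln u <= u / 10.
Proof.
move=> h.
have e : u = 20 * (u / 20) by field.
rewrite e ln_mult; [|lra|lra].
have := ln_le_sub1 20 ltac:(lra). have := ln_le_sub1 (u/20) ltac:(lra). lra.
Qed.

Lemma floor_nat r : 0 <= r -> exists n : nat, INR n <= r < INR n + 1.
Proof.
move=> h; case: (archimed r) => h1 h2.
have z1 : (1 <= up r)%Z.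
  have : (0 < up r)%Z by apply: lt_IZR; lra.
  lia.
exists (Z.to_nat (up r - 1)).
rewrite INR_IZR_INZ ZArith.Znat.Z2Nat.id; last lia.
rewrite minus_IZR /=; lra.
Qed.

Lemma ln_le x y : 0 < x -> x <= y -> ln x <= ln y.
Proof.
move=> h1 h2; case: (Rle_lt_or_eq_dec _ _ h2) => h3.
  by apply: Rlt_le; apply: ln_increasing.
by rewrite h3; apply: Rle_refl.
Qed.

Lemma INR_expn (a b : nat) : INR (expn a b) = INR a ^ b.
Proof. elim: b => [|b IH] //; by rewrite expnS mult_INR IH /=. Qed.

Lemma cheb_R (n : nat) : (0 < n)%nat ->
  2 * INR n * ln 2 <= ln (INR (2 * n)%nat.+1) + INR (pic (2 * n)%nat) * ln (INR (2 * n)%nat).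
Proof.
move=> n0.
have := cheb_nat n n0 => /leP /le_INR h.
rewrite mult_INR !INR_expn in h.
have p1 : 0 < INR (2 * n).+1 by apply: lt_0_INR; apply/ltP.
have p2 : 0 < INR (2 * n) by apply: lt_0_INR; apply/ltP; lia.
have p3 : 0 < INR 4 ^ n by apply: pow_lt; rewrite /=; lra.
have := Rle_trans _ _ _ (Rle_refl _) h => {}h.
have := ln_le _ _ p3 h.
rewrite ln_mult // ?ln_pow //; last (by apply: pow_lt); last (by rewrite /=; lra).
have e4 : INR 4 = 2 * 2 by rewrite /=; lra.
rewrite e4 ln_mult; [|lra|lra]. lra.
Qed.


Lemma INR_2n (n : nat) : INR (2 * n)%nat = (2 * INR n)%R.
Proof. by rewrite mult_INR. Qed.

Lemma prime_bound : exists M0 : nat, forall m : nat, (M0 <= m)%nat ->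
  (INR (nth_prime m) <= 2 * INR m * ln (INR m))%R.
Proof.
have [M0 hM0] := INR_archimed 1 (exp 400) ltac:(lra).
exists M0 => m hm.
have e400 := exp_pos 400.
have hxm : (exp 400 < INR m)%R.
  have := le_INR _ _ (elimT leP hm); lra.
set xm := INR m in hxm *.
have hu : (400 <= ln xm)%R.
  rewrite -[X in (X <= _)%R](ln_exp 400); apply: ln_le; lra.
set u := ln xm in hu *.
have hxm1 : (1 <= xm)%R.
  have := exp_ineq1_le 400; lra.
have [n [hn1 hn2]] := floor_nat (xm * u) ltac:(nra).
have n0 : (0 < n)%nat.
  case: n hn1 hn2 => [|n] //= hn1 hn2; nra.
have m0 : (0 < m)%nat.
  apply/ltP; apply: INR_lt; rewrite /= -/xm; lra.
have [a1 a2] := ln2_bounds.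
have lnu := ln_small u hu.
have hINRn : (1 <= INR n)%R by apply: (le_INR 1); apply/leP.
have key : (m <= pic (2 * n)%nat)%nat.
  rewrite leqNgt; apply/negP => hlt.
  have hP : (INR (pic (2 * n)%nat) + 1 <= xm)%R.
    rewrite -S_INR; apply: le_INR; apply/leP; exact: hlt.
  have hc := cheb_R n n0.
  rewrite S_INR !INR_2n in hc.
  have l1 : (ln (2 * INR n + 1) <= ln 2 + ln (2 * INR n))%R.
    rewrite -ln_mult; [|lra|lra]. apply: ln_le; lra.
  have l2 : (ln (2 * INR n) <= ln 2 + u + ln u)%R.
    rewrite -ln_mult; [|lra|lra]. rewrite -ln_mult; [|lra|lra]. apply: ln_le; nra.
  have l3 : (0 <= ln (2 * INR n))%R.
    rewrite -ln_1; apply: ln_le; lra.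
  have hP0 : (0 <= INR (pic (2 * n)%nat))%R by apply: pos_INR.
  have l4 : (INR (pic (2 * n)%nat) * ln (2 * INR n) <= (xm - 1) * ln (2 * INR n))%R.
    apply: Rmult_le_compat_r; lra.
  set a := ln 2 in a1 a2 hc l1 l2.
  set L2 := ln (2 * INR n) in l1 l2 l3 l4 hc.
  have s1 : (2 * INR n * a <= a + xm * (a + u + ln u))%R.
    have : (xm * L2 <= xm * (a + u + ln u))%R by apply: Rmult_le_compat_l; lra.
    nra.
  have s2 : (2 * (xm * u - 1) * a < 2 * INR n * a)%R by nra.
  have s3 : (xm * (a + u + ln u) <= xm * (a + u + u / 10))%R.
    apply: Rmult_le_compat_l; lra.
  have s4 : (400 * xm <= xm * u)%R by nra.
  nra.
have := nth_prime_le m _ m0 key => /leP /le_INR.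
rewrite INR_2n => h.
lra.
Qed.


Lemma foldr_mult_c (s : seq R) (c : R) :
  foldr Rmult c s = (foldr Rmult 1 s * c)%R.
Proof. elim: s => [|x s IH] /=; [lra | rewrite IH; lra]. Qed.

Lemma prodRS (i : nat) (f : nat -> R) : prodR i.+1 f = (prodR i f * f i.+1)%R.
Proof.
rewrite /prodR.
have -> : iota 1 i.+1 = iota 1 i ++ [:: i.+1].
  by rewrite -[i.+1]addn1 iotaD /= add1n addn1.
by rewrite map_cat foldr_cat /= foldr_mult_c Rmult_1_r.
Qed.

Lemma prodR0 (f : nat -> R) : prodR 0 f = 1%R.
Proof. by []. Qed.

Section Real.
Variables (L LL : R).
Hypothesis hL : (0 < L)%R.
Hypothesis hLL : LL = ln L.
Hypothesis h5 : (5 <= LL)%R.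

Definition a (l : nat) : R := (L + INR l * ln (INR l) * LL)%R.

Lemma tlnt_ge0 (t : R) : (1 <= t)%R -> (0 <= t * ln t)%R.
Proof.
move=> h; apply: Rmult_le_pos; first lra.
rewrite -ln_1; apply: ln_le; lra.
Qed.

Lemma a_pos l : (0 < a l)%R.
Proof.
rewrite /a; case: l => [|l]; first by rewrite /=; lra.
have := tlnt_ge0 (INR l.+1) ltac:(rewrite S_INR; have := pos_INR l; lra).
nra.
Qed.

Lemma LL_le_L : (LL <= L)%R.
Proof. have := ln_le_sub1 L hL; lra. Qed.

Lemma step_ineq i : (ln 2 + ln (a i.+1) <= a i.+2 - a i.+1)%R.
Proof.
have [a1 a2] := ln2_bounds.
case: i => [|i].
  rewrite /a /= ln_1.
  have e0 : (L + 1 * 0 * LL = L)%R by ring. rewrite e0 -hLL.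
  have e : (1 + 1 = 2)%R by lra. rewrite e. nra.
set t := INR i.+2.
have ht : (2 <= t)%R by rewrite /t !S_INR; have := pos_INR i; lra.
have e : INR i.+3 = (t + 1)%R by rewrite /t S_INR.
rewrite /a e -/t.
have lt0 : (ln 2 <= ln t)%R by apply: ln_le; lra.
have g : (ln t + 1 <= (t + 1) * ln (t + 1) - t * ln t)%R.
  have h := ln_le_sub1 (t / (t + 1)) ltac:(apply: Rdiv_lt_0_compat; lra).
  rewrite /Rdiv ln_mult in h; [|lra|apply: Rinv_0_lt_compat; lra].
  rewrite ln_Rinv in h; last lra.
  have e2 : (t * / (t + 1) - 1 = - / (t + 1))%R by field; lra.
  rewrite e2 in h.
  have : ((t + 1) * (ln t - ln (t + 1)) <= (t + 1) * (- / (t + 1)))%R.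
    apply: Rmult_le_compat_l; lra.
  have e3 : ((t + 1) * (- / (t + 1)) = -1)%R by field; lra.
  rewrite e3. nra.
have tl := tlnt_ge0 t ltac:(lra).
have hLLL := LL_le_L.
have b1 : (L + t * ln t * LL <= L * (1 + t * ln t))%R by nra.
have b2 : (1 + t * ln t <= t * t)%R.
  have := ln_le_sub1 t ltac:(lra). nra.
have b3 : (ln (L + t * ln t * LL) <= LL + 2 * ln t)%R.
  apply: Rle_trans (_ : ln (L * (t * t)) <= _)%R.
    apply: ln_le; nra.
  rewrite ln_mult; [|lra|nra]. rewrite ln_mult; [|lra|lra]. rewrite hLL. lra.
have : (LL * (ln t + 1) <= LL * ((t + 1) * ln (t + 1) - t * ln t))%R.
  apply: Rmult_le_compat_l; lra.
nra.
Qed.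

Definition B (x : R) (i : nat) : R := (2 ^ i * x * prodR i a)%R.

Lemma prodR_pos i : (0 < prodR i a)%R.
Proof.
elim: i => [|i IH]; first by rewrite prodR0; lra.
rewrite prodRS; apply: Rmult_lt_0_compat => //; exact: a_pos.
Qed.

Lemma B_exp (x : R) : L = ln x -> (0 < x)%R -> forall i, (B x i <= exp (a i.+1))%R.
Proof.
move=> hx x0; elim => [|i IH].
  rewrite /B /a prodR0 /= ln_1.
  have e0 : (L + 1 * 0 * LL = L)%R by ring. rewrite e0 hx exp_ln //; lra.
rewrite /B prodRS.
have e : (2 ^ i.+1 * x * (prodR i a * a i.+1) = 2 * a i.+1 * B x i)%R.
  by rewrite /B /=; ring.
rewrite e.
have ap := a_pos i.+1.
apply: Rle_trans (_ : 2 * a i.+1 * exp (a i.+1) <= _)%R.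
  apply: Rmult_le_compat_l; lra.
have := step_ineq i.
have e2 : (2 * a i.+1 * exp (a i.+1) = exp (ln 2 + ln (a i.+1) + a i.+1))%R.
  rewrite !exp_plus !exp_ln //; lra.
rewrite e2 => h.
case: (Rle_lt_or_eq_dec _ _ (_ : ln 2 + ln (a i.+1) + a i.+1 <= a i.+2)%R); first lra.
  by move=> hh; apply: Rlt_le; apply: exp_increasing.
by move=> ->; apply: Rle_refl.
Qed.

End Real.


Lemma iter_ge (i y : nat) : (y <= iter i nth_prime y)%nat.
Proof.
elim: i => [|i IH] //=; apply: leq_trans IH _; exact: nth_prime_ge.
Qed.

Lemma iter_prime_ge (k n : nat) : (1 <= n)%nat -> (k + n <= iter_prime k n)%nat.
Proof.
move=> hn; elim: k => [|k IH] //=.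
rewrite /iter_prime /= -/(iter_prime k n).
have := @nth_prime_gt (iter_prime k n) ltac:(lia). lia.
Qed.

Delimit Scope nat_scope with N.
Theorem theorem10 (n : nat) (hn : (1 <= n)%N) :
  exists k0 : nat, forall k j : nat, (k0 <= k)%N -> (k <= j)%N ->
    (INR (iter_prime j n) <=
     2 ^ (subn j k) * INR (iter_prime k n) *
     prodR (subn j k) (fun i : nat =>
       ln (INR (iter_prime k n)) +
       INR i * ln (INR i) * ln (ln (INR (iter_prime k n)))))%R.
Proof.
have [M0 hM0] := prime_bound.
have [K hK] := INR_archimed 1 (exp (exp 5)) ltac:(lra).
exists (maxn M0 K) => k j hk hj.
have hx := iter_prime_ge k n hn.
set x := iter_prime k n in hx *.
have xM0 : (M0 <= x)%nat by lia.
have xK : (exp (exp 5) < INR x)%R.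
  have hKx : (K <= x)%nat by lia.
  have := le_INR K x (elimT leP hKx); lra.
set L := ln (INR x).
have e5 := exp_pos 5.
have ee5 := exp_pos (exp 5).
have hL : (exp 5 < L)%R.
  rewrite /L -[X in (X < _)%R](ln_exp (exp 5)); apply: ln_increasing; lra.
have hL0 : (0 < L)%R by lra.
set LL := ln L.
have h5 : (5 <= LL)%R.
  rewrite /LL -[X in (X <= _)%R](ln_exp 5); apply: ln_le; lra.
have hx0 : (0 < INR x)%R by lra.
have eBE := B_exp L LL hL0 (erefl LL) h5 (INR x) (erefl L) hx0.
have ej : iter_prime j n = iter (subn j k) nth_prime x.
  by rewrite /x /iter_prime -iterD subnK.
rewrite ej.
change (INR (iter (subn j k) nth_prime x) <= B L LL (INR x) (subn j k))%R.
elim: (subn j k) => [|i IH].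
  rewrite /B prodR0 /=; lra.
have hy := iter_ge i x.
set y := iter i nth_prime x in IH hy *.
rewrite iterS -/y.
have yM0 : (M0 <= y)%nat by lia.
have hy1 : (1 <= INR y)%R.
  have h1y : (1 <= y)%nat by lia.
  have := le_INR 1 y (elimT leP h1y); rewrite /=; lra.
have hb := hM0 y yM0.
have lny : (ln (INR y) <= a L LL i.+1)%R.
  rewrite -(ln_exp (a L LL i.+1)); apply: ln_le; first lra.
  apply: Rle_trans IH (eBE i).
have lny0 : (0 <= ln (INR y))%R by rewrite -ln_1; apply: ln_le; lra.
apply: Rle_trans hb _.
rewrite /B prodRS.
have e : (2 ^ i.+1 * INR x * (prodR i (a L LL) * a L LL i.+1) =
          2 * B L LL (INR x) i * a L LL i.+1)%R by rewrite /B /=; ring.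
rewrite e.
have : (INR y * ln (INR y) <= B L LL (INR x) i * a L LL i.+1)%R.
  apply: Rmult_le_compat => //; lra.
lra.
Qed.
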